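(* For $\delta\in(0,\tfrac16)$, let $\mathbb E[Q]$ be the stationary mean number of items in the FCFS matching model on the graph with nodes $\{1,2,3,4\}$ and edges $\{1,3\},\{1,4\},\{2,3\},\{2,4\},\{3,4\}$, and let $\mathbb E[\overline Q]$ be the same quantity for the complete graph on $\{1,2,3,4\}$ (i.e. after adding the edge $\{1,2\}$), both with arrival distribution $\alpha_1=\alpha_2=0.25-\delta$, $\alpha_3=0.5-\delta$, $\alpha_4=3\delta$. Then there exist numbers $0<\delta_1<\delta_2<\tfrac16$ with $\delta_1\approx0.0563$ and $\delta_2\approx 0.134$ such that a Braess paradox occurs, i.e. $\mathbb E[\overline Q]>\mathbb E[Q]$, if and only if $\delta\in(0,\delta_1)\cup(\delta_2,\tfrac16)$.
   Context: A matching model consists of a finite connected simple graph $\mathcal G=(\mathcal V,\xi)$ (the compatibility graph), $\mathcal V=\{1,\dots,n\}$, and a probability distribution $\alpha=(\alpha_1,\dots,\alpha_n)$ on $\mathcal V$ with all $\alpha_i>0$. In each time step an item of class $i$ arrives with probability proportional to $\alpha_i$ (time steps with no arrival do not affect stationary quantities). For $i\in\mathcal V$ let $\mathcal E(i)$ be the set of neighbours of $i$ in $\mathcal G$; for $V\subseteq\mathcal V$ let $\mathcal E(V)=\bigcup_{i\in V}\mathcal E(i)$ and $|\alpha_V|=\sum_{i\in V}\alpha_i$. The state of the system is a finite word $w=w_1\cdots w_q$ over $\mathcal V$ in which no two letters are adjacent in $\mathcal G$ (the classes of the unmatched items in order of arrival). Under the First Come First Served (FCFS) policy, if an item of class $i$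 arrives in state $w$: if some letter of $w$ lies in $\mathcal E(i)$, the first (oldest) such letter is deleted (the two items are matched and leave); otherwise $i$ is appended at the end of $w$. This defines a Markov chain $W$. An independent set is a non-empty subset of $\mathcal V$ no two of whose elements are adjacent; $\mathbb I$ denotes the set of independent sets of $\mathcal G$. The stability condition is $|\alpha_{\mathcal I}|<|\alpha_{\mathcal E(\mathcal I)}|$ for all $\mathcal I\in\mathbb I$; under it $W$ is positive recurrent with unique stationary distribution $\pi(w)=\pi_0\prod_{i=1}^q\alpha_{w_i}/|\alpha_{\mathcal E(\{w_1,\dots,w_i\})}|$. $Q$ is the number of items in the system (length of the word), and $\mathbb E[Q]$ its mean under the stationary distribution. Given two distinct non-adjacent nodes $i^*,j^*$ of $\mathcal G$, $\overline{\mathcal G}$ is $\mathcal G$ with the edge $\{i^*,j^*\}$ added and $\mathbb E[\overline Q]$ is the corresponding stationary mean for $\overline{\mathcal G}$ with the same $\alpha$. A Braess paradox occurs if $\mathbb E[\overline Q]>\mathbb E[Q]$. *)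

(* Defs.v *)
From HB Require Import structures.
From mathcomp Require Import all_boot all_order all_algebra.
From mathcomp Require Import all_classical all_reals all_analysis.
Set Implicit Arguments. Unset Strict Implicit. Unset Printing Implicit Defensive.
Import Order.TTheory GRing.Theory Num.Theory.
Import numFieldNormedType.Exports.
Local Open Scope ring_scope.

(* A matching model on the node set 'I_n (node k+1 of the paper is k : 'I_n):
   compatibility graph given by a (symmetric, irreflexive) relation adj,
   arrival distribution a : 'I_n -> R. *)

Definition nbhd (n : nat) (adj : rel 'I_n) (V : {set 'I_n}) : {set 'I_n} :=
  [set j | [exists i in V, adj i j]].

Definition alphaS (R : realType) (n : nat) (a : 'I_n -> R) (V : {set 'I_n}) : R :=
  \sum_(i in V) a i.

(* A state: a word in which no two letters are adjacent in the graph *)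
Definition admissible (n : nat) (adj : rel 'I_n) (w : seq 'I_n) : bool :=
  all2rel (fun x y => ~~ adj x y) w.

(* product-form weight of a state w = w_1...w_q (without the constant pi_0):
   prod_{i=1}^{q} alpha_{w_i} / |alpha_{E({w_1,...,w_i})}| *)
Definition pf_weight (R : realType) (n q : nat) (adj : rel 'I_n) (a : 'I_n -> R)
    (w : q.-tuple 'I_n) : R :=
  \prod_(i < q) (a (tnth w i) / alphaS a (nbhd adj [set x in take i.+1 w])).

Definition len_weight (R : realType) (n : nat) (adj : rel 'I_n) (a : 'I_n -> R)
    (q : nat) : R :=
  \sum_(w : q.-tuple 'I_n | admissible adj w) pf_weight adj a w.

Definition pi0 (R : realType) (n : nat) (adj : rel 'I_n) (a : 'I_n -> R) : R :=
  (limn (series (len_weight adj a)))^-1.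

(* E[Q] = sum_w |w| pi(w) = pi_0 * sum_q q * (weight of states of length q) *)
Definition meanQ (R : realType) (n : nat) (adj : rel 'I_n) (a : 'I_n -> R) : R :=
  pi0 adj a * limn (series (fun q => q%:R * len_weight adj a q)).

Definition add_edge (n : nat) (adj : rel 'I_n) (i j : 'I_n) : rel 'I_n :=
  fun x y => adj x y || ((x == i) && (y == j)) || ((x == j) && (y == i)).

Definition braess (R : realType) (n : nat) (adj : rel 'I_n) (a : 'I_n -> R)
    (i j : 'I_n) : Prop :=
  meanQ adj a < meanQ (add_edge adj i j) a.

(* The example: nodes 1,2,3,4 of the paper are 0,1,2,3 : 'I_4.
   Edges {1,3},{1,4},{2,3},{2,4},{3,4}. *)
Definition exG : rel 'I_4 :=
  fun x y => let u := nat_of_ord x in let v := nat_of_ord y in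
    (u != v) && ~~ ((u <= 1)%N && (v <= 1)%N).

Definition node (k : nat) : 'I_4 := inord k.

Definition exGbar : rel 'I_4 := add_edge exG (node 0) (node 1).

Definition exAlpha (R : realType) (d : R) : 'I_4 -> R :=
  fun x => match nat_of_ord x with
           | 0%N | 1%N => 4%:R^-1 - d
           | 2%N => 2%:R^-1 - d
           | _ => 3%:R * d
           end.

(* Main.v *)
Require Import Defs.
From HB Require Import structures.
From mathcomp Require Import all_boot all_order all_algebra.
From mathcomp Require Import all_classical all_reals all_analysis.
From mathcomp Require Import lra ring.
Set Implicit Arguments. Unset Strict Implicit. Unset Printing Implicit Defensive.
Import Order.TTheory GRing.Theory Num.Theory.
Import numFieldNormedType.Exports.
Local Open Scope ring_scope.

Lemma exG_nadj (x y : 'I_4) : ~~ exG x y = (x == y) || ((x <= 1)%N && (y <= 1)%N).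
Proof. by case: x => [[|[|[|[|//]]]] ?] ; case: y => [[|[|[|[|//]]]] ?]. Qed.

Lemma node_val k : (k < 4)%N -> nat_of_ord (node k) = k.
Proof. by move=> h; rewrite /node inordK. Qed.

Lemma exGbar_nadj (x y : 'I_4) : ~~ exGbar x y = (x == y).
Proof.
rewrite /exGbar /add_edge -!(inj_eq val_inj) /= !node_val //. by case: x => [[|[|[|[|//]]]] ?] ; case: y => [[|[|[|[|//]]]] ?]. Qed.

Definition V01 : {set 'I_4} := [set y : 'I_4 | (y <= 1)%N].
Definition Vk (k : nat) : {set 'I_4} := [set y : 'I_4 | nat_of_ord y == k].

Lemma adm_exG (w : seq 'I_4) (x0 : 'I_4) :
  admissible exG (x0 :: w) =
  [|| all (fun y => y \in V01) (x0 :: w), all (fun y => y \in Vk 2) (x0 :: w)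
    | all (fun y => y \in Vk 3) (x0 :: w)].
Proof.
rewrite /admissible; apply/idP/idP.
- move/allrelP => H.
  have H' : forall y, y \in x0 :: w -> ~~ exG x0 y by move=> y hy; apply: H => //; exact: mem_head.
  have E : forall P : pred 'I_4, (forall y, ~~ exG x0 y -> P y) -> all P (x0 :: w).
    by move=> P HP; apply/allP => y hy; apply: HP; apply: H'.
  case: x0 H H' E => [[|[|[|[|//]]]] Hx] H H' E.
  + apply/orP; left; apply: E => y; rewrite exG_nadj inE.
    case/orP => [/eqP <- // | /andP [] //].
  + apply/orP; left; apply: E => y; rewrite exG_nadj inE.
    case/orP => [/eqP <- // | /andP [] //].
  + apply/orP; right; apply/orP; left; apply: E => y; rewrite exG_nadj inE.
    case/orP => [/eqP <- // | /andP [] //].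
  + apply/orP; right; apply/orP; right; apply: E => y; rewrite exG_nadj inE.
    case/orP => [/eqP <- // | /andP [] //].
- case/or3P => /allP H; apply/allrelP => x y hx hy; rewrite exG_nadj;
    have := H x hx; have := H y hy; rewrite !inE.
  + by move=> -> ->; rewrite orbT.
  + by move=> /eqP hy' /eqP hx'; apply/orP; left; apply/eqP/val_inj; rewrite /= hx' hy'.
  + by move=> /eqP hy' /eqP hx'; apply/orP; left; apply/eqP/val_inj; rewrite /= hx' hy'.
Qed.

Lemma adm_exGbar (w : seq 'I_4) (x0 : 'I_4) :
  admissible exGbar (x0 :: w) =
  [|| all (fun y => y \in Vk 0) (x0 :: w), all (fun y => y \in Vk 1) (x0 :: w),
      all (fun y => y \in Vk 2) (x0 :: w) | all (fun y => y \in Vk 3) (x0 :: w)].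
Proof.
rewrite /admissible; apply/idP/idP.
- move/allrelP => H.
  have H' : forall y, y \in x0 :: w -> ~~ exGbar x0 y by move=> y hy; apply: H => //; exact: mem_head.
  have E : forall P : pred 'I_4, (forall y, ~~ exGbar x0 y -> P y) -> all P (x0 :: w).
    by move=> P HP; apply/allP => y hy; apply: HP; apply: H'.
  case: x0 H H' E => [[|[|[|[|//]]]] Hx] H H' E.
  + apply/orP; left; apply: E => y; rewrite exGbar_nadj inE => /eqP <- //.
  + apply/orP; right; apply/orP; left; apply: E => y; rewrite exGbar_nadj inE => /eqP <- //.
  + apply/orP; right; apply/orP; right; apply/orP; left; apply: E => y; rewrite exGbar_nadj inE => /eqP <- //.
  + apply/orP; right; apply/orP; right; apply/orP; right; apply: E => y; rewrite exGbar_nadj inE => /eqP <- //.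
- case/or4P => /allP H; apply/allrelP => x y hx hy; rewrite exGbar_nadj;
    have := H x hx; have := H y hy; rewrite !inE;
    by move=> /eqP hy' /eqP hx'; apply/eqP/val_inj; rewrite /= hx' hy'.
Qed.

Lemma class_weight (R : realType) n (adj : rel 'I_n) (a : 'I_n -> R) q
    (w : q.-tuple 'I_n) (V : {set 'I_n}) (s : R) :
  (forall (S : {set 'I_n}) x, S \subset V -> x \in S -> alphaS a (nbhd adj S) = s) ->
  all (fun y => y \in V) w -> pf_weight adj a w = \prod_(i < q) (a (tnth w i) / s).
Proof.
move=> HS Hw; apply: eq_bigr => i _.
have h1 : [set x in take i.+1 w] \subset V.
  by apply/fintype.subsetP => x; rewrite inE => /mem_take hx; exact: (allP Hw).
have h2 : tnth w i \in [set x in take i.+1 w].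
  rewrite inE (tnth_nth (tnth w i)) -(nth_take _ (ltnSn i)); apply: mem_nth.
  by rewrite size_takel ?size_tuple.
by rewrite (HS _ _ h1 h2).
Qed.

Lemma class_sum (R : realType) n (adj : rel 'I_n) (a : 'I_n -> R) q
    (V : {set 'I_n}) (s : R) :
  (forall (S : {set 'I_n}) x, S \subset V -> x \in S -> alphaS a (nbhd adj S) = s) ->
  \sum_(w : q.-tuple 'I_n | all (fun y => y \in V) w) pf_weight adj a w =
  (\sum_(j in V) (a j / s)) ^+ q.
Proof.
move=> HS.
rewrite (eq_bigr (fun w : q.-tuple 'I_n => \prod_(i < q) (a (tnth w i) / s))); last first.
  move=> w hw. exact: (class_weight HS hw).
rewrite (reindex (@tuple_of_finfun _ q)); last first.
  by exists finfun_of_tuple => x _; [exact: tuple_of_finfunK | exact: finfun_of_tupleK].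
have -> : (\sum_(j in V) (a j / s)) ^+ q = \prod_(i < q) \sum_(j in V) (a j / s).
  by rewrite big_const_ord iter_mulr_1.
rewrite bigA_distr_big.
apply: eq_big => [f | f _].
  apply/idP/idP.
    move/all_tnthP => H; apply/ffun_onP => x; have := H x.
    by rewrite tnth_map tnth_ord_tuple.
  move/ffun_onP => H; apply/all_tnthP => x.
  by rewrite tnth_map tnth_ord_tuple.
by apply: eq_bigr => i _; rewrite tnth_map tnth_ord_tuple.
Qed.

Lemma sumU (T : finType) (R : realType) (P1 P2 : pred T) (F : T -> R) :
  (forall w, P1 w -> ~~ P2 w) ->
  \sum_(w | P1 w || P2 w) F w = \sum_(w | P1 w) F w + \sum_(w | P2 w) F w.
Proof.
move=> H; rewrite (bigID P1) /=; congr (_ + _); apply: eq_bigl => w.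
  by case: (boolP (P1 w)) => h; rewrite ?andbT ?andbF ?orbT.
case: (boolP (P1 w)) => h; rewrite ?andbT ?andbF ?orbF //.
by rewrite (negbTE (H _ h)).
Qed.

Lemma excl (V W : {set 'I_4}) (w : seq 'I_4) : w != [::] ->
  (forall x, x \in V -> x \in W -> False) ->
  all (fun y => y \in V) w -> ~~ all (fun y => y \in W) w.
Proof.
case: w => [//|x w] _ H /= /andP [hV _]; apply/negP => /andP [hW _].
exact: (H x).
Qed.

Lemma nbhd_single n (adj : rel 'I_n) (S : {set 'I_n}) x :
  x \in S -> (forall y, y \in S -> y = x) -> nbhd adj S = [set j | adj x j].
Proof.
move=> hx H; apply/setP => j; rewrite !inE; apply/existsP/idP.
  by case=> i /andP [hi hij]; rewrite -(H i hi).
by move=> h; exists x; rewrite hx.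
Qed.

Lemma Vk_single (S : {set 'I_4}) x k : S \subset Vk k -> x \in S -> forall y, y \in S -> y = x.
Proof.
move=> /fintype.subsetP hS hx y hy; apply/val_inj => /=.
by have := hS _ hx; have := hS _ hy; rewrite !inE => /eqP -> /eqP ->.
Qed.

Lemma Vk_node (x : 'I_4) k : (k < 4)%N -> x \in Vk k -> x = node k.
Proof. by move=> hk; rewrite inE => /eqP hx; apply/val_inj; rewrite /= node_val. Qed.

Lemma nbhd_V01 (S : {set 'I_4}) x : S \subset V01 -> x \in S ->
  nbhd exG S = [set j : 'I_4 | (2 <= j)%N].
Proof.
move=> /fintype.subsetP hS hx; apply/setP => j; rewrite !inE; apply/existsP/idP.
  case=> i /andP [hi hij]; have := hS _ hi; rewrite inE.
  by move: hij; case: i {hi} => [[|[|[|[|//]]]] ?]; case: j => [[|[|[|[|//]]]] ?].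
move=> hj; exists x; rewrite hx /=; have := hS _ hx; rewrite inE.
by move: hj; case: x {hx} => [[|[|[|[|//]]]] ?]; case: j => [[|[|[|[|//]]]] ?].
Qed.

Lemma tuple_nonnil (T : eqType) q (w : q.+1.-tuple T) : tval w != [::].
Proof. by case: w => [[|x s] hs]. Qed.

Lemma lw_exG (R : realType) (a : 'I_4 -> R) q :
  len_weight exG a q.+1 =
    (\sum_(j in V01) (a j / alphaS a [set j : 'I_4 | (2 <= j)%N])) ^+ q.+1
  + (\sum_(j in Vk 2) (a j / alphaS a [set j | exG (node 2) j])) ^+ q.+1
  + (\sum_(j in Vk 3) (a j / alphaS a [set j | exG (node 3) j])) ^+ q.+1.
Proof.
rewrite /len_weight.
rewrite (eq_bigl (fun w : q.+1.-tuple 'I_4 =>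
   [|| all (fun y => y \in V01) w, all (fun y => y \in Vk 2) w
     | all (fun y => y \in Vk 3) w])); last first.
  by case=> [[|x s] hs] //=; rewrite adm_exG.
rewrite sumU; last first.
  move=> w h; apply/negP => /orP [] h'; move: h'; apply/negP; apply: excl h => //;
    try exact: tuple_nonnil;
    by move=> x; rewrite !inE => h1 /eqP h2; move: h1; rewrite h2.
rewrite sumU; last first.
  move=> w; apply: excl; first exact: tuple_nonnil.
  by move=> x; rewrite !inE => /eqP -> /eqP.
rewrite -addrA (class_sum _ _ (s := alphaS a [set j : 'I_4 | (2 <= j)%N])); last first.
  by move=> S x hS hx; rewrite (nbhd_V01 hS hx).
rewrite (class_sum _ _ (s := alphaS a [set j | exG (node 2) j])); last first.
  move=> S x hS hx; rewrite (nbhd_single _ hx (Vk_single hS hx)).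
  have hx2 : x \in Vk 2 by exact: (fintype.subsetP hS).
  by rewrite (Vk_node _ hx2).
rewrite (class_sum _ _ (s := alphaS a [set j | exG (node 3) j])); last first.
  move=> S x hS hx; rewrite (nbhd_single _ hx (Vk_single hS hx)).
  have hx2 : x \in Vk 3 by exact: (fintype.subsetP hS).
  by rewrite (Vk_node _ hx2).
by rewrite addrA.
Qed.

Lemma Vk_excl (w : seq 'I_4) k l : (k != l)%N -> w != [::] ->
  all (fun y => y \in Vk k) w -> ~~ all (fun y : 'I_4 => y \in Vk l) w.
Proof.
move=> hkl hw; apply: excl => // x; rewrite !inE => /eqP -> /eqP h.
by rewrite h eqxx in hkl.
Qed.

Lemma class_single (R : realType) (adj : rel 'I_4) (a : 'I_4 -> R) q k :
  (k < 4)%N ->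
  \sum_(w : q.-tuple 'I_4 | all (fun y => y \in Vk k) w) pf_weight adj a w =
  (\sum_(j in Vk k) (a j / alphaS a [set j | adj (node k) j])) ^+ q.
Proof.
move=> hk; apply: class_sum => S x hS hx.
rewrite (nbhd_single _ hx (Vk_single hS hx)).
have hx2 : x \in Vk k by exact: (fintype.subsetP hS).
by rewrite (Vk_node hk hx2).
Qed.

Lemma lw_exGbar (R : realType) (a : 'I_4 -> R) q :
  len_weight exGbar a q.+1 =
    (\sum_(j in Vk 0) (a j / alphaS a [set j | exGbar (node 0) j])) ^+ q.+1
  + (\sum_(j in Vk 1) (a j / alphaS a [set j | exGbar (node 1) j])) ^+ q.+1
  + (\sum_(j in Vk 2) (a j / alphaS a [set j | exGbar (node 2) j])) ^+ q.+1
  + (\sum_(j in Vk 3) (a j / alphaS a [set j | exGbar (node 3) j])) ^+ q.+1.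
Proof.
rewrite /len_weight.
rewrite (eq_bigl (fun w : q.+1.-tuple 'I_4 =>
   [|| all (fun y => y \in Vk 0) w, all (fun y => y \in Vk 1) w,
       all (fun y => y \in Vk 2) w | all (fun y => y \in Vk 3) w])); last first.
  by case=> [[|x s] hs] //=; rewrite adm_exGbar.
have hn := @tuple_nonnil _ q.
rewrite sumU; last first.
  move=> w h; apply/negP => /or3P [] h'; move: h'; apply/negP;
  by apply: Vk_excl h.
rewrite sumU; last first.
  move=> w h; apply/negP => /orP [] h'; move: h'; apply/negP;
  by apply: Vk_excl h.
rewrite sumU; last first.
  by move=> w; apply: Vk_excl.
by rewrite !class_single // !addrA.
Qed.

Lemma lw0 (R : realType) n (adj : rel 'I_n) (a : 'I_n -> R) : len_weight adj a 0 = 1.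
Proof.
rewrite /len_weight (big_pred1 [tuple]); first by rewrite /pf_weight big_ord0.
by move=> w; rewrite tuple0.
Qed.

Lemma sum4 (R : realType) (P : pred 'I_4) (f : 'I_4 -> R) :
  \sum_(j | P j) f j = (if P ord0 then f ord0 else 0) + (if P (@Ordinal 4 1 erefl) then f (@Ordinal 4 1 erefl) else 0)
     + (if P (@Ordinal 4 2 erefl) then f (@Ordinal 4 2 erefl) else 0) + (if P (@Ordinal 4 3 erefl) then f (@Ordinal 4 3 erefl) else 0).
Proof.
rewrite big_mkcond !big_ord_recl big_ord0 /= addr0 !addrA.
by congr (_ + _ + _ + _); congr (if P _ then f _ else 0); apply/val_inj.
Qed.


Local Open Scope classical_set_scope.
Local Open Scope ring_scope.

Lemma series_pow (R : realType) (z : R) : `|z| < 1 ->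
  series (fun q => z ^+ q) @ \oo --> (1 - z)^-1.
Proof.
move=> h; have := @cvg_geometric_series R 1 z h; rewrite mul1r.
have -> : geometric 1 z = (fun q => z ^+ q) by apply/funext => q; rewrite /= mul1r.
by [].
Qed.

Lemma series_npow_eq (R : realType) (z : R) n : z != 1 ->
  series (fun q => q%:R * z ^+ q) n = (z - z ^+ n.+1) / (1 - z) ^+ 2 - n%:R * z ^+ n / (1 - z).
Proof.
move=> hz; have hz' : 1 - z != 0 by rewrite subr_eq0 eq_sym.
elim: n => [|n IH].
  by rewrite seriesEnat /= big_geq // expr1 subrr !mul0r subr0.
rewrite seriesSr IH !exprS -natr1; field; exact: hz'.
Qed.

Lemma series_npow (R : realType) (z : R) : 0 <= z -> z < 1 ->
  series (fun q => q%:R * z ^+ q) @ \oo --> z / (1 - z) ^+ 2.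
Proof.
move=> z0 z1; have hz : z != 1 by rewrite lt_eqF.
have h1z : 0 < 1 - z by rewrite subr_gt0.
have E : series (fun q => q%:R * z ^+ q) =
   (fun n => (z - z ^+ n.+1) / (1 - z) ^+ 2 - n%:R * z ^+ n / (1 - z)).
  by apply/funext => n; rewrite series_npow_eq.
have cv : cvgn (series (fun q => q%:R * z ^+ q)).
  apply: nondecreasing_is_cvgn.
    by apply: nondecreasing_series => n _ _; rewrite mulr_ge0 // exprn_ge0.
  exists (z / (1 - z) ^+ 2) => _ [n _ <-]; rewrite E /=.
  rewrite lerBlDr -[X in X <= _]addr0; apply: lerD.
    by rewrite ler_pM2r ?invr_gt0 ?exprn_gt0 // gerBl exprn_ge0.
  by rewrite divr_ge0 ?mulr_ge0 ?exprn_ge0 // ltW.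
have t0 := cvg_series_cvg_0 cv.
rewrite E.
have -> : z / (1 - z) ^+ 2 = (z - 0) / (1 - z) ^+ 2 - 0 / (1 - z) by rewrite subr0 mul0r subr0.
apply: cvgB.
  apply: cvgMr_tmp; apply: cvgB; first exact: cvg_cst.
  have := @cvg_expr R z; rewrite ger0_norm // => /(_ z1) h.
  rewrite (_ : (fun n => z ^+ n.+1) = (fun n => z * z ^+ n)); last first.
    by apply/funext => n; rewrite exprS.
  by rewrite -(mulr0 z); exact: cvgMl_tmp.
exact: cvgMr_tmp.
Qed.

Ltac nz := repeat (apply/andP; split); first [apply: lt0r_neq0; lra | apply: ltr0_neq0; lra | apply: lt0r_neq0; nra].

Lemma cvg_seriesD (R : realType) (u v : R^nat) a b :
  series u @ \oo --> a -> series v @ \oo --> b ->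
  series (fun q => u q + v q) @ \oo --> a + b.
Proof.
move=> hu hv; have -> : series (fun q => u q + v q) = series u + series v.
  by rewrite -seriesD.
exact: cvgD.
Qed.

Lemma cvg_seriesB (R : realType) (u v : R^nat) a b :
  series u @ \oo --> a -> series v @ \oo --> b ->
  series (fun q => u q - v q) @ \oo --> a - b.
Proof.
move=> hu hv; have -> : series (fun q => u q - v q) = series u - series v.
  by rewrite -seriesN -seriesD.
exact: cvgB.
Qed.

Lemma cvg_seriesM (R : realType) (u : R^nat) c a :
  series u @ \oo --> a -> series (fun q => c * u q) @ \oo --> c * a.
Proof.
move=> hu; have -> : series (fun q => c * u q) = (fun n => c * series u n).
  by apply/funext => n; rewrite !seriesEnat /= mulr_sumr.
exact: cvgMl_tmp.
Qed.

Section Ex.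
Variable R : realType.
Variable d : R.

Let a := exAlpha d.
Definition gx : R := (1 - 4 * d) / (1 + 4 * d).
Definition g2 : R := (1 - 2 * d) / (1 + 2 * d).
Definition g3 : R := 3 * d / (1 - 3 * d).
Definition gb : R := (1 - 4 * d) / (3 + 4 * d).

Lemma lwG (h0 : 0 < d) (h1 : d < 6^-1) : len_weight exG a = (fun q => gx ^+ q + g2 ^+ q + g3 ^+ q - 2 * 0 ^+ q).
Proof.
apply/funext => [[|q]].
  by rewrite lw0 !expr0; ring.
rewrite lw_exG expr0n /= mulr0 subr0.
rewrite /a /alphaS /gx /g2 /g3 !sum4 !inE /exG !node_val // /exAlpha /=.
congr (_ ^+ _ + _ ^+ _ + _ ^+ _); field; nz.
Qed.

Lemma lwGb (h0 : 0 < d) (h1 : d < 6^-1) : len_weight exGbar a = (fun q => gb ^+ q + gb ^+ q + g2 ^+ q + g3 ^+ q - 3 * 0 ^+ q).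
Proof.
apply/funext => [[|q]].
  by rewrite lw0 !expr0; ring.
rewrite lw_exGbar expr0n /= mulr0 subr0.
rewrite /a /alphaS /gb /g2 /g3 !sum4 !inE /exGbar /add_edge /exG -!(inj_eq val_inj) /= !node_val // /exAlpha /=.
congr (_ ^+ _ + _ ^+ _ + _ ^+ _ + _ ^+ _); field; nz.
Qed.

Lemma frac01 (p q : R) : 0 <= p -> p < q -> `|p / q| < 1.
Proof.
move=> hp hpq; have hq : 0 < q by apply: le_lt_trans hpq.
have hpq' : 0 <= p / q by rewrite divr_ge0 // ltW.
by rewrite ger0_norm // ltr_pdivrMr // mul1r.
Qed.

Lemma frac01' (p q : R) : 0 <= p -> p < q -> 0 <= p / q /\ p / q < 1.
Proof.
move=> hp hpq; have hq : 0 < q by apply: le_lt_trans hpq.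
have hpq' : 0 <= p / q by rewrite divr_ge0 // ltW.
by split => //; rewrite ltr_pdivrMr // mul1r.
Qed.

Definition LG : R := (1 - gx)^-1 + (1 - g2)^-1 + (1 - g3)^-1 - 2 * (1 - 0)^-1.
Definition LGb : R := (1 - gb)^-1 + (1 - gb)^-1 + (1 - g2)^-1 + (1 - g3)^-1 - 3 * (1 - 0)^-1.
Definition MG : R := gx / (1 - gx) ^+ 2 + g2 / (1 - g2) ^+ 2 + g3 / (1 - g3) ^+ 2 - 2 * (0 / (1 - 0) ^+ 2).
Definition MGb : R := gb / (1 - gb) ^+ 2 + gb / (1 - gb) ^+ 2 + g2 / (1 - g2) ^+ 2 + g3 / (1 - g3) ^+ 2 - 3 * (0 / (1 - 0) ^+ 2).

Lemma gx_n (h0 : 0 < d) (h1 : d < 6^-1) : `|gx| < 1.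
Proof. apply: frac01; lra. Qed.
Lemma g2_n (h0 : 0 < d) (h1 : d < 6^-1) : `|g2| < 1.
Proof. apply: frac01; lra. Qed.
Lemma g3_n (h0 : 0 < d) (h1 : d < 6^-1) : `|g3| < 1.
Proof. apply: frac01; lra. Qed.
Lemma gb_n (h0 : 0 < d) (h1 : d < 6^-1) : `|gb| < 1.
Proof. apply: frac01; lra. Qed.
Lemma gx_b (h0 : 0 < d) (h1 : d < 6^-1) : 0 <= gx /\ gx < 1.
Proof. apply: frac01'; lra. Qed.
Lemma g2_b (h0 : 0 < d) (h1 : d < 6^-1) : 0 <= g2 /\ g2 < 1.
Proof. apply: frac01'; lra. Qed.
Lemma g3_b (h0 : 0 < d) (h1 : d < 6^-1) : 0 <= g3 /\ g3 < 1.
Proof. apply: frac01'; lra. Qed.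
Lemma gb_b (h0 : 0 < d) (h1 : d < 6^-1) : 0 <= gb /\ gb < 1.
Proof. apply: frac01'; lra. Qed.

Lemma n0 : `|0 : R| < 1.
Proof. by rewrite normr0. Qed.

Lemma limLG (h0 : 0 < d) (h1 : d < 6^-1) : limn (series (len_weight exG a)) = LG.
Proof.
rewrite lwG //; apply: cvg_lim; first exact: norm_hausdorff; rewrite /LG.
apply: (@cvg_seriesB _ (fun q => gx ^+ q + g2 ^+ q + g3 ^+ q) (fun q => 2 * 0 ^+ q)).
  apply: (@cvg_seriesD _ (fun q => gx ^+ q + g2 ^+ q) (fun q => g3 ^+ q)).
    apply: (@cvg_seriesD _ (fun q => gx ^+ q) (fun q => g2 ^+ q)).
      by apply: series_pow; exact: gx_n.
    by apply: series_pow; exact: g2_n.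
  by apply: series_pow; exact: g3_n.
by apply: (@cvg_seriesM _ (fun q => 0 ^+ q)); apply: series_pow; exact: n0.
Qed.

Lemma limLGb (h0 : 0 < d) (h1 : d < 6^-1) : limn (series (len_weight exGbar a)) = LGb.
Proof.
rewrite lwGb //; apply: cvg_lim; first exact: norm_hausdorff; rewrite /LGb.
apply: (@cvg_seriesB _ (fun q => gb ^+ q + gb ^+ q + g2 ^+ q + g3 ^+ q) (fun q => 3 * 0 ^+ q)).
  apply: (@cvg_seriesD _ (fun q => gb ^+ q + gb ^+ q + g2 ^+ q) (fun q => g3 ^+ q)).
    apply: (@cvg_seriesD _ (fun q => gb ^+ q + gb ^+ q) (fun q => g2 ^+ q)).
      apply: (@cvg_seriesD _ (fun q => gb ^+ q) (fun q => gb ^+ q)).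
        by apply: series_pow; exact: gb_n.
      by apply: series_pow; exact: gb_n.
    by apply: series_pow; exact: g2_n.
  by apply: series_pow; exact: g3_n.
by apply: (@cvg_seriesM _ (fun q => 0 ^+ q)); apply: series_pow; exact: n0.
Qed.

Lemma limMG (h0 : 0 < d) (h1 : d < 6^-1) :
  limn (series (fun q => q%:R * len_weight exG a q)) = MG.
Proof.
rewrite lwG //; apply: cvg_lim; first exact: norm_hausdorff; rewrite /MG.
have -> : (fun q => q%:R * (gx ^+ q + g2 ^+ q + g3 ^+ q - 2 * 0 ^+ q)) =
  (fun q => q%:R * gx ^+ q + q%:R * g2 ^+ q + q%:R * g3 ^+ q - 2 * (q%:R * 0 ^+ q)).
  by apply/funext => q; ring.
have [? ?] := gx_b h0 h1; have [? ?] := g2_b h0 h1; have [? ?] := g3_b h0 h1.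
apply: (@cvg_seriesB _ (fun q => q%:R * gx ^+ q + q%:R * g2 ^+ q + q%:R * g3 ^+ q)
          (fun q => 2 * (q%:R * 0 ^+ q))).
  apply: (@cvg_seriesD _ (fun q => q%:R * gx ^+ q + q%:R * g2 ^+ q) (fun q => q%:R * g3 ^+ q)).
    apply: (@cvg_seriesD _ (fun q => q%:R * gx ^+ q) (fun q => q%:R * g2 ^+ q)).
      by apply: series_npow.
    by apply: series_npow.
  by apply: series_npow.
by apply: (@cvg_seriesM _ (fun q => q%:R * 0 ^+ q)); apply: series_npow.
Qed.

Lemma limMGb (h0 : 0 < d) (h1 : d < 6^-1) :
  limn (series (fun q => q%:R * len_weight exGbar a q)) = MGb.
Proof.
rewrite lwGb //; apply: cvg_lim; first exact: norm_hausdorff; rewrite /MGb.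
have -> : (fun q => q%:R * (gb ^+ q + gb ^+ q + g2 ^+ q + g3 ^+ q - 3 * 0 ^+ q)) =
  (fun q => q%:R * gb ^+ q + q%:R * gb ^+ q + q%:R * g2 ^+ q + q%:R * g3 ^+ q - 3 * (q%:R * 0 ^+ q)).
  by apply/funext => q; ring.
have [? ?] := gb_b h0 h1; have [? ?] := g2_b h0 h1; have [? ?] := g3_b h0 h1.
apply: (@cvg_seriesB _ (fun q => q%:R * gb ^+ q + q%:R * gb ^+ q + q%:R * g2 ^+ q + q%:R * g3 ^+ q)
          (fun q => 3 * (q%:R * 0 ^+ q))).
  apply: (@cvg_seriesD _ (fun q => q%:R * gb ^+ q + q%:R * gb ^+ q + q%:R * g2 ^+ q) (fun q => q%:R * g3 ^+ q)).
    apply: (@cvg_seriesD _ (fun q => q%:R * gb ^+ q + q%:R * gb ^+ q) (fun q => q%:R * g2 ^+ q)).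
      apply: (@cvg_seriesD _ (fun q => q%:R * gb ^+ q) (fun q => q%:R * gb ^+ q)).
        by apply: series_npow.
      by apply: series_npow.
    by apply: series_npow.
  by apply: series_npow.
by apply: (@cvg_seriesM _ (fun q => q%:R * 0 ^+ q)); apply: series_npow.
Qed.

Lemma meanG (h0 : 0 < d) (h1 : d < 6^-1) : meanQ exG a = LG^-1 * MG.
Proof. by rewrite /meanQ /pi0 limLG // limMG. Qed.

Lemma meanGb (h0 : 0 < d) (h1 : d < 6^-1) : meanQ exGbar a = LGb^-1 * MGb.
Proof. by rewrite /meanQ /pi0 limLGb // limMGb. Qed.

Definition pp (u : R) : R := 4 - 30 * u + 64 * u ^+ 2 - 45 * u ^+ 3 + 13 * u ^+ 4 - 15 * u ^+ 5 + 9 * u ^+ 6.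

Lemma LG_E (h0 : 0 < d) (h1 : d < 6^-1) : LG = 3 * (1 - 2 * d) * (1 - 4 * d) / (8 * d * (1 - 6 * d)).
Proof. by rewrite /LG /gx /g2 /g3; field; nz. Qed.

Lemma LGb_E (h0 : 0 < d) (h1 : d < 6^-1) : LGb = (1 - 4 * d) * (1 + 8 * d - 24 * d ^+ 2) / (4 * d * (1 - 6 * d) * (1 + 4 * d)).
Proof. by rewrite /LGb /gb /g2 /g3; field; nz. Qed.

Lemma MG_E (h0 : 0 < d) (h1 : d < 6^-1) : MG = (1 - 16 * d ^+ 2) / (64 * d ^+ 2) + (1 - 4 * d ^+ 2) / (16 * d ^+ 2) + 3 * d * (1 - 3 * d) / (1 - 6 * d) ^+ 2.
Proof. by rewrite /MG /gx /g2 /g3; field; nz. Qed.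

Lemma MGb_E (h0 : 0 < d) (h1 : d < 6^-1) : MGb = 2 * (1 - 4 * d) * (3 + 4 * d) / (4 * (1 + 4 * d) ^+ 2) + (1 - 4 * d ^+ 2) / (16 * d ^+ 2) + 3 * d * (1 - 3 * d) / (1 - 6 * d) ^+ 2.
Proof. by rewrite /MGb /gb /g2 /g3; field; nz. Qed.

Lemma diffE (h0 : 0 < d) (h1 : d < 6^-1) :
  LGb^-1 * MGb - LG^-1 * MG = pp (4 * d) / (96 * d * (1 + 4 * d) * (1 - 2 * d) * (1 - 4 * d) * (1 + 8 * d - 24 * d ^+ 2)).
Proof.
rewrite LG_E // LGb_E // MG_E // MGb_E // /pp.
by field; nz.
Qed.

Lemma braess_iff (h0 : 0 < d) (h1 : d < 6^-1) :
  braess exG (exAlpha d) (node 0) (node 1) <-> 0 < pp (4 * d).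
Proof.
rewrite /braess; change (meanQ exG a < meanQ exGbar a <-> 0 < pp (4 * d)).
rewrite -subr_gt0 meanGb // meanG // diffE //.
have hD : 0 < 96 * d * (1 + 4 * d) * (1 - 2 * d) * (1 - 4 * d) * (1 + 8 * d - 24 * d ^+ 2).
  by repeat apply: mulr_gt0; first [lra | nra].
by rewrite ltr_pdivlMr // mul0r.
Qed.

End Ex.

Section Poly.
Variable R : realType.

Definition ppu (u : R) : R := 4 - 30 * u + 64 * u ^+ 2 - 45 * u ^+ 3 + 13 * u ^+ 4 - 15 * u ^+ 5 + 9 * u ^+ 6.
Definition e0 (a : R) : R := 4 + (-30) * a ^+ 1 + 64 * a ^+ 2 + (-45) * a ^+ 3 + 13 * a ^+ 4 + (-15) * a ^+ 5 + 9 * a ^+ 6.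
Definition e1 (a : R) : R := (-30) + 128 * a ^+ 1 + (-135) * a ^+ 2 + 52 * a ^+ 3 + (-75) * a ^+ 4 + 54 * a ^+ 5.
Definition e2 (a : R) : R := 64 + (-135) * a ^+ 1 + 78 * a ^+ 2 + (-150) * a ^+ 3 + 135 * a ^+ 4.
Definition e3 (a : R) : R := (-45) + 52 * a ^+ 1 + (-150) * a ^+ 2 + 180 * a ^+ 3.
Definition e4 (a : R) : R := 13 + (-75) * a ^+ 1 + 135 * a ^+ 2.
Definition e5 (a : R) : R := (-15) + 54 * a ^+ 1.
Definition e6 (a : R) : R := 9.

Lemma taylor a t : ppu (a + t) = e0 a + e1 a * t ^+ 1 + e2 a * t ^+ 2 + e3 a * t ^+ 3
  + e4 a * t ^+ 4 + e5 a * t ^+ 5 + e6 a * t ^+ 6.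
Proof. rewrite /ppu /e0 /e1 /e2 /e3 /e4 /e5 /e6; ring. Qed.

Lemma term_lb (e m t h : R) k : m <= e -> m <= 0 -> 0 <= t -> t <= h -> m * h ^+ k <= e * t ^+ k.
Proof.
move=> hme hm ht hth.
have htk : t ^+ k <= h ^+ k by apply: lerXn2r => //; rewrite nnegrE //; apply: le_trans hth.
apply: (@le_trans _ _ (m * t ^+ k)).
  by apply: ler_wnM2l.
by apply: ler_wpM2r => //; rewrite exprn_ge0.
Qed.

Lemma term_ub (e m t h : R) k : e <= m -> 0 <= m -> 0 <= t -> t <= h -> e * t ^+ k <= m * h ^+ k.
Proof.
move=> hme hm ht hth.
have htk : t ^+ k <= h ^+ k by apply: lerXn2r => //; rewrite nnegrE //; apply: le_trans hth.
apply: (@le_trans _ _ (m * t ^+ k)).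
  by apply: ler_wpM2r => //; rewrite exprn_ge0.
by apply: ler_wpM2l.
Qed.

Lemma lb_pp a h t m0 m1 m2 m3 m4 m5 m6 :
  m0 <= e0 a -> m1 <= e1 a -> m1 <= 0 -> m2 <= e2 a -> m2 <= 0 -> m3 <= e3 a -> m3 <= 0 ->
  m4 <= e4 a -> m4 <= 0 -> m5 <= e5 a -> m5 <= 0 -> m6 <= e6 a -> m6 <= 0 ->
  0 <= t -> t <= h ->
  m0 + m1 * h ^+ 1 + m2 * h ^+ 2 + m3 * h ^+ 3 + m4 * h ^+ 4 + m5 * h ^+ 5 + m6 * h ^+ 6 <= ppu (a + t).
Proof.
move=> ? ? ? ? ? ? ? ? ? ? ? ? ? ? ?; rewrite taylor.
by repeat apply: lerD => //; apply: term_lb.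
Qed.

Lemma ub_pp a h t m0 m1 m2 m3 m4 m5 m6 :
  e0 a <= m0 -> e1 a <= m1 -> 0 <= m1 -> e2 a <= m2 -> 0 <= m2 -> e3 a <= m3 -> 0 <= m3 ->
  e4 a <= m4 -> 0 <= m4 -> e5 a <= m5 -> 0 <= m5 -> e6 a <= m6 -> 0 <= m6 ->
  0 <= t -> t <= h ->
  ppu (a + t) <= m0 + m1 * h ^+ 1 + m2 * h ^+ 2 + m3 * h ^+ 3 + m4 * h ^+ 4 + m5 * h ^+ 5 + m6 * h ^+ 6.
Proof.
move=> ? ? ? ? ? ? ? ? ? ? ? ? ? ? ?; rewrite taylor.
by repeat apply: lerD => //; apply: term_ub.
Qed.

Definition HH k (s t : R) := \sum_(i < k) t ^+ (k.-1 - i) * s ^+ i.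

Lemma HH_bounds k (s t h : R) : 0 <= s -> s <= h -> 0 <= t -> t <= h ->
  0 <= HH k s t /\ HH k s t <= k%:R * h ^+ k.-1.
Proof.
move=> hs hsh ht hth; split.
  by apply: sumr_ge0 => i _; rewrite mulr_ge0 // exprn_ge0.
have -> : k%:R * h ^+ k.-1 = \sum_(i < k) h ^+ k.-1.
  by rewrite sumr_const card_ord mulr_natl.
apply: ler_sum => i _.
have hi : (k.-1 - i + i = k.-1)%N.
  by rewrite subnK //; case: i => i /=; case: k => // k; rewrite ltnS.
rewrite -{2}hi exprD; apply: ler_pM; rewrite ?exprn_ge0 //.
  by apply: lerXn2r => //; rewrite nnegrE //; apply: le_trans hth.
by apply: lerXn2r => //; rewrite nnegrE //; apply: le_trans hsh.
Qed.

Lemma HH1 (s t : R) : HH 1 s t = 1.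
Proof. by rewrite /HH big_ord1 !expr0 mulr1. Qed.

Lemma diff_pp a s t : ppu (a + t) - ppu (a + s) = (t - s) *
  (e1 a * HH 1 s t + e2 a * HH 2 s t + e3 a * HH 3 s t + e4 a * HH 4 s t
   + e5 a * HH 5 s t + e6 a * HH 6 s t).
Proof.
have hk : forall k, (t - s) * HH k s t = t ^+ k - s ^+ k by move=> k; rewrite /HH subrXX.
rewrite !mulrDr !(mulrCA (t - s)) !hk !taylor; ring.
Qed.

Lemma term_ub2 (e M H B : R) : e <= M -> 0 <= M -> 0 <= H -> H <= B -> e * H <= M * B.
Proof.
move=> h1 h2 h3 h4; apply: (@le_trans _ _ (M * H)).
  by apply: ler_wpM2r.
by apply: ler_wpM2l.
Qed.

Lemma term_lb2 (e m H B : R) : m <= e -> m <= 0 -> 0 <= H -> H <= B -> m * B <= e * H.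
Proof.
move=> h1 h2 h3 h4; apply: (@le_trans _ _ (m * H)).
  by apply: ler_wnM2l.
by apply: ler_wpM2r.
Qed.

Lemma dec_pp a h M2 M3 M4 M5 M6 :
  e2 a <= M2 -> 0 <= M2 -> e3 a <= M3 -> 0 <= M3 -> e4 a <= M4 -> 0 <= M4 ->
  e5 a <= M5 -> 0 <= M5 -> e6 a <= M6 -> 0 <= M6 ->
  e1 a + M2 * (2%:R * h ^+ 1) + M3 * (3%:R * h ^+ 2) + M4 * (4%:R * h ^+ 3)
     + M5 * (5%:R * h ^+ 4) + M6 * (6%:R * h ^+ 5) < 0 ->
  forall s t, 0 <= s -> s < t -> t <= h -> ppu (a + t) < ppu (a + s).
Proof.
move=> ? ? ? ? ? ? ? ? ? ? hb s t hs hst hth.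
have hsh : s <= h by apply: ltW; apply: lt_le_trans hth.
have ht : 0 <= t by apply: ltW; apply: le_lt_trans hst.
rewrite -subr_lt0 diff_pp pmulr_rlt0 ?subr_gt0 //.
apply: le_lt_trans; last exact: hb. rewrite HH1 mulr1.
repeat apply: lerD => //; apply: term_ub2 => //;
  first [exact: (proj1 (HH_bounds _ hs hsh ht hth)) | exact: (proj2 (HH_bounds _ hs hsh ht hth))].
Qed.

Lemma inc_pp a h m2 m3 m4 m5 m6 :
  m2 <= e2 a -> m2 <= 0 -> m3 <= e3 a -> m3 <= 0 -> m4 <= e4 a -> m4 <= 0 ->
  m5 <= e5 a -> m5 <= 0 -> m6 <= e6 a -> m6 <= 0 ->
  0 < e1 a + m2 * (2%:R * h ^+ 1) + m3 * (3%:R * h ^+ 2) + m4 * (4%:R * h ^+ 3)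
     + m5 * (5%:R * h ^+ 4) + m6 * (6%:R * h ^+ 5) ->
  forall s t, 0 <= s -> s < t -> t <= h -> ppu (a + s) < ppu (a + t).
Proof.
move=> ? ? ? ? ? ? ? ? ? ? hb s t hs hst hth.
have hsh : s <= h by apply: ltW; apply: lt_le_trans hth.
have ht : 0 <= t by apply: ltW; apply: le_lt_trans hst.
rewrite -subr_gt0 diff_pp pmulr_rgt0 ?subr_gt0 //.
apply: lt_le_trans; first exact: hb. rewrite HH1 mulr1.
repeat apply: lerD => //; apply: term_lb2 => //;
  first [exact: (proj1 (HH_bounds _ hs hsh ht hth)) | exact: (proj2 (HH_bounds _ hs hsh ht hth))].
Qed.


Lemma posA0 (u : R) : 0 <= u -> u <= (13 / 100) -> 0 < ppu u.
Proof.
move=> h1 h2; have -> : u = 0 + (u - 0) by rewrite addrC subrK.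
apply: lt_le_trans; last apply: (@lb_pp 0 ((13 / 100) - 0) (u - 0) 4 (- 30) 0 (- 45) 0 (- 15) 0).
all: try (by clear h1 h2; unfold e0, e1, e2, e3, e4, e5, e6; lra).
all: lra.
Qed.

Lemma posA1 (u : R) : (13 / 100) <= u -> u <= (99 / 500) -> 0 < ppu u.
Proof.
move=> h1 h2; have -> : u = (13 / 100) + (u - (13 / 100)) by rewrite addrC subrK.
apply: lt_le_trans; last apply: (@lb_pp (13 / 100) ((99 / 500) - (13 / 100)) (u - (13 / 100)) (1 + 859 / 10000) (- (15 + 5467 / 10000)) 0 (- (40 + 3796 / 10000)) 0 (- (399 / 50)) 0).
all: try (by clear h1 h2; unfold e0, e1, e2, e3, e4, e5, e6; lra).
all: lra.
Qed.

Lemma posA2 (u : R) : (99 / 500) <= u -> u <= (111 / 500) -> 0 < ppu u.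
Proof.
move=> h1 h2; have -> : u = (99 / 500) + (u - (99 / 500)) by rewrite addrC subrK.
apply: lt_le_trans; last apply: (@lb_pp (99 / 500) ((111 / 500) - (99 / 500)) (u - (99 / 500)) (2357 / 10000) (- (9 + 6438 / 10000)) 0 (- (39 + 1874 / 10000)) 0 (- (1077 / 250)) 0).
all: try (by clear h1 h2; unfold e0, e1, e2, e3, e4, e5, e6; lra).
all: lra.
Qed.

Lemma posA3 (u : R) : (111 / 500) <= u -> u <= (563 / 2500) -> 0 < ppu u.
Proof.
move=> h1 h2; have -> : u = (111 / 500) + (u - (111 / 500)) by rewrite addrC subrK.
apply: lt_le_trans; last apply: (@lb_pp (111 / 500) ((563 / 2500) - (111 / 500)) (u - (111 / 500)) (263 / 10000) (- (7 + 8215 / 10000)) 0 (- (38 + 8793 / 10000)) 0 (- (753 / 250)) 0).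
all: try (by clear h1 h2; unfold e0, e1, e2, e3, e4, e5, e6; lra).
all: lra.
Qed.

Lemma negB0 (u : R) : (141 / 625) <= u -> u <= (231 / 1000) -> ppu u < 0.
Proof.
move=> h1 h2; have -> : u = (141 / 625) + (u - (141 / 625)) by rewrite addrC subrK.
apply: le_lt_trans; first apply: (@ub_pp (141 / 625) ((231 / 1000) - (141 / 625)) (u - (141 / 625)) (- (3 / 2500)) 0 (36 + 1413 / 10000) 0 (2 + 9509 / 10000) 0 9).
all: try (by clear h1 h2; unfold e0, e1, e2, e3, e4, e5, e6; lra).
all: lra.
Qed.

Lemma negB1 (u : R) : (231 / 1000) <= u -> u <= (33 / 125) -> ppu u < 0.
Proof.
move=> h1 h2; have -> : u = (231 / 1000) + (u - (231 / 1000)) by rewrite addrC subrK.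
apply: le_lt_trans; first apply: (@ub_pp (231 / 1000) ((33 / 125) - (231 / 1000)) (u - (231 / 1000)) (- (41 / 1000)) 0 (35 + 5126 / 10000) 0 (7197 / 2500) 0 9).
all: try (by clear h1 h2; unfold e0, e1, e2, e3, e4, e5, e6; lra).
all: lra.
Qed.

Lemma negB2 (u : R) : (33 / 125) <= u -> u <= (351 / 1000) -> ppu u < 0.
Proof.
move=> h1 h2; have -> : u = (33 / 125) + (u - (33 / 125)) by rewrite addrC subrK.
apply: le_lt_trans; first apply: (@ub_pp (33 / 125) ((351 / 1000) - (33 / 125)) (u - (33 / 125)) (- (601 / 2500)) 0 (31 + 6921 / 10000) 0 (2609 / 1000) 0 9).
all: try (by clear h1 h2; unfold e0, e1, e2, e3, e4, e5, e6; lra).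
all: lra.
Qed.

Lemma negB3 (u : R) : (351 / 1000) <= u -> u <= (99 / 200) -> ppu u < 0.
Proof.
move=> h1 h2; have -> : u = (351 / 1000) + (u - (351 / 1000)) by rewrite addrC subrK.
apply: le_lt_trans; first apply: (@ub_pp (351 / 1000) ((99 / 200) - (351 / 1000)) (u - (351 / 1000)) (- (571 / 1250)) 0 (21 + 7873 / 10000) 0 (2067 / 625) (1977 / 500) 9).
all: try (by clear h1 h2; unfold e0, e1, e2, e3, e4, e5, e6; lra).
all: lra.
Qed.

Lemma negB4 (u : R) : (99 / 200) <= u -> u <= (107 / 200) -> ppu u < 0.
Proof.
move=> h1 h2; have -> : u = (99 / 200) + (u - (99 / 200)) by rewrite addrC subrK.
apply: le_lt_trans; first apply: (@ub_pp (99 / 200) ((107 / 200) - (99 / 200)) (u - (99 / 200)) (- (199 / 1250)) (3 + 6906 / 10000) (6 + 1989 / 10000) 0 (8 + 9534 / 10000) (1173 / 100) 9).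
all: try (by clear h1 h2; unfold e0, e1, e2, e3, e4, e5, e6; lra).
all: lra.
Qed.

Lemma negB5 (u : R) : (107 / 200) <= u -> u <= (1071 / 2000) -> ppu u < 0.
Proof.
move=> h1 h2; have -> : u = (107 / 200) + (u - (107 / 200)) by rewrite addrC subrK.
apply: le_lt_trans; first apply: (@ub_pp (107 / 200) ((1071 / 2000) - (107 / 200)) (u - (107 / 200)) (- (19 / 5000)) (4 + 249 / 10000) (2 + 1909 / 10000) 0 (11 + 5154 / 10000) (1389 / 100) 9).
all: try (by clear h1 h2; unfold e0, e1, e2, e3, e4, e5, e6; lra).
all: lra.
Qed.

Lemma posC0 (u : R) : (1073 / 2000) <= u -> u <= (72 / 125) -> 0 < ppu u.
Proof.
move=> h1 h2; have -> : u = (1073 / 2000) + (u - (1073 / 2000)) by rewrite addrC subrK.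
apply: lt_le_trans; last apply: (@lb_pp (1073 / 2000) ((72 / 125) - (1073 / 2000)) (u - (1073 / 2000)) (21 / 10000) 0 0 (- (32 + 4809 / 10000)) 0 0 0).
all: try (by clear h1 h2; unfold e0, e1, e2, e3, e4, e5, e6; lra).
all: lra.
Qed.

Lemma posC1 (u : R) : (72 / 125) <= u -> u <= (2 / 3) -> 0 < ppu u.
Proof.
move=> h1 h2; have -> : u = (72 / 125) + (u - (72 / 125)) by rewrite addrC subrK.
apply: lt_le_trans; last apply: (@lb_pp (72 / 125) ((2 / 3) - (72 / 125)) (u - (72 / 125)) (813 / 5000) 0 (- (4217 / 2500)) (- (30 + 4159 / 10000)) 0 0 0).
all: try (by clear h1 h2; unfold e0, e1, e2, e3, e4, e5, e6; lra).
all: lra.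
Qed.

Lemma decI (s t : R) : (563 / 2500) <= s -> s < t -> t <= (141 / 625) -> ppu t < ppu s.
Proof.
move=> h1 h2 h3; have -> : t = (563 / 2500) + (t - (563 / 2500)) by rewrite addrC subrK.
have -> : s = (563 / 2500) + (s - (563 / 2500)) by rewrite addrC subrK.
apply: (@dec_pp (563 / 2500) ((141 / 625) - (563 / 2500)) (36 + 1879 / 10000) 0 (2 + 9566 / 10000) 0 9).
all: try (by clear h1 h2 h3; unfold e0, e1, e2, e3, e4, e5, e6; lra).
all: lra.
Qed.

Lemma incI (s t : R) : (1071 / 2000) <= s -> s < t -> t <= (1073 / 2000) -> ppu s < ppu t.
Proof.
move=> h1 h2 h3; have -> : t = (1071 / 2000) + (t - (1071 / 2000)) by rewrite addrC subrK.
have -> : s = (1071 / 2000) + (s - (1071 / 2000)) by rewrite addrC subrK.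
apply: (@inc_pp (1071 / 2000) ((1073 / 2000) - (1071 / 2000)) 0 (- (32 + 5273 / 10000)) 0 0 0).
all: try (by clear h1 h2 h3; unfold e0, e1, e2, e3, e4, e5, e6; lra).
all: lra.
Qed.
End Poly.

Section Final.
Variable R : realType.

Lemma ppu_cont : continuous (@ppu R).
Proof.
have -> : @ppu R = horner (Poly [:: 4; -30; 64; -45; 13; -15; 9]).
  by apply/funext => x; rewrite horner_Poly /= /ppu; ring.
exact: continuous_horner.
Qed.



Lemma root_dec (a b : R) : a <= b -> 0 < ppu a -> ppu b < 0 ->
  exists c, [/\ a < c, c < b & ppu c = 0].
Proof.
move=> hab ha hb.
have hcont : {within `[a, b], continuous (@ppu R)}.
  by apply: continuous_subspaceT; exact: ppu_cont.
have hv : Num.min (ppu a) (ppu b) <= 0 <= Num.max (ppu a) (ppu b).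
  by rewrite ge_min le_max (ltW hb) (ltW ha) ?orbT.
have [c hc hc0] := @IVT R (@ppu R) a b 0 hab hcont hv.
move: hc; rewrite in_itv /= => /andP [h1 h2].
exists c; split => //.
  by rewrite lt_neqAle h1 andbT; apply/eqP => e; move: ha; rewrite e hc0 ltxx.
by rewrite lt_neqAle h2 andbT; apply/eqP => e; move: hb; rewrite -e hc0 ltxx.
Qed.

Lemma root_inc (a b : R) : a <= b -> ppu a < 0 -> 0 < ppu b ->
  exists c, [/\ a < c, c < b & ppu c = 0].
Proof.
move=> hab ha hb.
have hcont : {within `[a, b], continuous (@ppu R)}.
  by apply: continuous_subspaceT; exact: ppu_cont.
have hv : Num.min (ppu a) (ppu b) <= 0 <= Num.max (ppu a) (ppu b).
  by rewrite ge_min le_max (ltW hb) (ltW ha) ?orbT.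
have [c hc hc0] := @IVT R (@ppu R) a b 0 hab hcont hv.
move: hc; rewrite in_itv /= => /andP [h1 h2].
exists c; split => //.
  by rewrite lt_neqAle h1 andbT; apply/eqP => e; move: ha; rewrite e hc0 ltxx.
by rewrite lt_neqAle h2 andbT; apply/eqP => e; move: hb; rewrite -e hc0 ltxx.
Qed.

Lemma regA (u : R) : 0 <= u -> u <= 563 / 2500 -> 0 < ppu u.
Proof.
move=> h1 h2.
case: (lerP u (13 / 100)) => h3; first exact: posA0.
case: (lerP u (99 / 500)) => h4; first by apply: posA1; lra.
case: (lerP u (111 / 500)) => h5; first by apply: posA2; lra.
by apply: posA3; lra.
Qed.

Lemma regB (u : R) : 141 / 625 <= u -> u <= 1071 / 2000 -> ppu u < 0.
Proof.
move=> h1 h2.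
case: (lerP u (231 / 1000)) => h3; first exact: negB0.
case: (lerP u (33 / 125)) => h4; first by apply: negB1; lra.
case: (lerP u (351 / 1000)) => h5; first by apply: negB2; lra.
case: (lerP u (99 / 200)) => h6; first by apply: negB3; lra.
case: (lerP u (107 / 200)) => h7; first by apply: negB4; lra.
by apply: negB5; lra.
Qed.

Lemma regC (u : R) : 1073 / 2000 <= u -> u <= 2 / 3 -> 0 < ppu u.
Proof.
move=> h1 h2.
case: (lerP u (72 / 125)) => h3; first exact: posC0.
by apply: posC1; lra.
Qed.

End Final.

Theorem mainTheorem3 (R : realType) :
  exists d1 d2 : R,
    [/\ (0 < d1) && (d1 < d2) && (d2 < 6%:R^-1),
        `|d1 - 563%:R / 10000%:R| < 10000%:R^-1,
        `|d2 - 134%:R / 1000%:R| < 1000%:R^-1 &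
        forall d : R, 0 < d -> d < 6%:R^-1 ->
          (braess exG (exAlpha d) (node 0) (node 1) <->
           (d < d1 \/ d2 < d))].
Proof.
have [u1 [hu1a hu1b hu1]] : exists c : R, [/\ 563 / 2500 < c, c < 141 / 625 & ppu c = 0].
  apply: root_dec; first lra.
    by apply: regA; lra.
  by apply: regB; lra.
have [u2 [hu2a hu2b hu2]] : exists c : R, [/\ 1071 / 2000 < c, c < 1073 / 2000 & ppu c = 0].
  apply: root_inc; first lra.
    by apply: regB; lra.
  by apply: regC; lra.
exists (u1 / 4), (u2 / 4); split.
- apply/andP; split; [apply/andP; split|].
  + by clear -hu1a; lra.
  + by clear -hu1b hu2a; lra.
  + by clear -hu2b; lra.
- by rewrite ltr_norml; apply/andP; split; clear -hu1a hu1b; lra.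
- by rewrite ltr_norml; apply/andP; split; clear -hu2a hu2b; lra.
move=> d hd0 hd1.
rewrite (braess_iff hd0 hd1).
have -> : pp (4 * d) = ppu (4 * d) by [].
have hu0 : 0 <= 4 * d by clear -hd0; lra.
have hu23 : 4 * d <= 2 / 3 by clear -hd1; lra.
have E1 : (d < u1 / 4) <-> (4 * d < u1) by split => ?; lra.
have E2 : (u2 / 4 < d) <-> (u2 < 4 * d) by split => ?; lra.
rewrite E1 E2; clear E1 E2 hd0 hd1.
move: (4 * d) hu0 hu23 => u hu0 hu23.
split.
- move=> hp.
  case: (ltrP u u1) => h; first by left.
  case: (ltrP u2 u) => h'; first by right.
  exfalso; suff : ppu u <= 0 by clear -hp; lra.
  case: (lerP u (141 / 625)) => ha.
    have [e|ne] := eqVneq u u1; first by rewrite e hu1.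
    have hlt : u1 < u by rewrite lt_neqAle eq_sym ne h.
    rewrite -hu1; apply: ltW; apply: decI => //.
    by clear -hu1a; lra.
  case: (lerP u (1071 / 2000)) => hb.
    by apply: ltW; apply: regB => //; clear -ha; lra.
  have [e|ne] := eqVneq u u2; first by rewrite e hu2.
  have hlt : u < u2 by rewrite lt_neqAle ne h'.
  rewrite -hu2; apply: ltW; apply: incI => //.
    by clear -hb; lra.
  by clear -hu2b; lra.
- case => h.
    case: (lerP u (563 / 2500)) => ha; first by apply: regA.
    rewrite -hu1; apply: decI => //.
      by clear -ha; lra.
    by clear -hu1b; lra.
  case: (lerP (1073 / 2000) u) => hb; first by apply: regC.
  rewrite -hu2; apply: incI => //.
    by clear -hu2a; lra.
  by clear -hb; lra.
Qed.
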